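(* For any monoid $M$, $\mathfrak{L}(\mathrm{Val},\mathrm{PDA},M)=\mathfrak{L}(\mathrm{Val},\mathrm{NFA},\mathrm{P}_2\times M)$.
   Context: A pushdown automaton is $(Q,\Sigma,\Gamma,\delta,q_0,Q_a)$ with finite states $Q$, input alphabet $\Sigma$, stack alphabet $\Gamma$, initial state $q_0$, accept states $Q_a$, and $\delta: Q\times\Sigma_\varepsilon\times\Gamma_\varepsilon\to\mathbb{P}(Q\times\Gamma_\varepsilon)$ (with $X_\varepsilon=X\cup\{\varepsilon\}$; a transition reads an input letter or nothing, pops a symbol or nothing, pushes a symbol or nothing). A valence PDA over $M$ assigns to each transition an element of $M$ (its valence); the valence of a computation is the product of the valences of its transitions in order, and a word is accepted if there is an accepting computation for it whose valence is the identity of $M$ (accepting computations being those of the underlying PDA, ending in an accept state with empty stack). $\mathfrak{L}(\mathrm{Val},\mathrm{PDA},M)$ is the family of languages so accepted. A valence automaton over a monoid $N$ is a nondeterministic finite automaton with $\varepsilon$-moves in which each transition carries a valence in $N$, accepting a word if some computation reading it from the initial state to an accept state has valence product equal to the identity; $\mathfrak{L}(\mathrm{Val},\mathrm{NFA},N)$ is the family of such languages. For a finite alphabet $X$, the polycyclic monoid $P(X)$ is the monoid of partial functions on $X^*$ generated by $P_x:u\mapsto ux$ and $Q_x: ux\mapsto u$ (defined only on $X^*x$), $x\in X$; $\mathrm{P}_2$ is the polycyclic monoid on a two-letter alphabet. *)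

(* Defs.v *)
From Stdlib Require Import FunctionalExtensionality ProofIrrelevance.
From mathcomp Require Import all_boot.

Set Implicit Arguments.
Unset Strict Implicit.
Unset Printing Implicit Defensive.

Record monoid := Monoid {
  mcar :> Type;
  mmul : mcar -> mcar -> mcar;
  mone : mcar;
  mmulA : forall x y z, mmul x (mmul y z) = mmul (mmul x y) z;
  mul1m : forall x, mmul mone x = x;
  mulm1 : forall x, mmul x mone = x }.

Section Prod.
Variables M N : monoid.
Definition prod_mul (x y : M * N) : M * N := (mmul x.1 y.1, mmul x.2 y.2).
Lemma prod_mulA x y z : prod_mul x (prod_mul y z) = prod_mul (prod_mul x y) z.
Proof. by rewrite /prod_mul /= !mmulA. Qed.
Lemma prod_mul1m x : prod_mul (mone M, mone N) x = x.
Proof. by case: x => a b; rewrite /prod_mul /= !mul1m. Qed.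
Lemma prod_mulm1 x : prod_mul x (mone M, mone N) = x.
Proof. by case: x => a b; rewrite /prod_mul /= !mulm1. Qed.
Definition prod_monoid : monoid :=
  @Monoid (M * N)%type prod_mul (mone M, mone N) prod_mulA prod_mul1m prod_mulm1.
End Prod.

(* The polycyclic monoid P(X): the monoid of partial functions on X^*  *)
(* generated by P_x : u |-> ux and Q_x : ux |-> u.  Partial functions  *)
(* act on the right: the product f g means "first f, then g".          *)
Section Polycyclic.
Variable X : eqType.

Definition pfun := seq X -> option (seq X).

Definition Pgen (x : X) : pfun := fun u => Some (rcons u x).
Definition Qgen (x : X) : pfun := fun u =>
  if (0 < size u) && (last x u == x) then Some (take (size u).-1 u) else None.

Definition pid : pfun := fun u => Some u.
Definition pcomp (f g : pfun) : pfun := fun u => obind g (f u).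

Inductive in_polycyclic : pfun -> Prop :=
| pc_id : in_polycyclic pid
| pc_P x f : in_polycyclic f -> in_polycyclic (pcomp f (Pgen x))
| pc_Q x f : in_polycyclic f -> in_polycyclic (pcomp f (Qgen x)).

Lemma pcompA f g h : pcomp f (pcomp g h) = pcomp (pcomp f g) h.
Proof. by apply: functional_extensionality => u; rewrite /pcomp; case: (f u). Qed.
Lemma pcomp1f f : pcomp pid f = f.
Proof. by apply: functional_extensionality. Qed.
Lemma pcompf1 f : pcomp f pid = f.
Proof. by apply: functional_extensionality => u; rewrite /pcomp; case: (f u). Qed.

Lemma in_polycyclic_comp f g :
  in_polycyclic f -> in_polycyclic g -> in_polycyclic (pcomp f g).
Proof.
move=> Hf; elim=> [|x g' _ IH|x g' _ IH]; first by rewrite pcompf1.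
- by rewrite pcompA; apply: pc_P.
- by rewrite pcompA; apply: pc_Q.
Qed.

Definition polycyc := {f : pfun | in_polycyclic f}.

Lemma polycyc_eq (a b : polycyc) : proj1_sig a = proj1_sig b -> a = b.
Proof.
case: a => f Hf; case: b => g Hg /= E; subst g.
by rewrite (proof_irrelevance _ Hf Hg).
Qed.

Definition pc_mul (a b : polycyc) : polycyc :=
  exist _ (pcomp (proj1_sig a) (proj1_sig b))
    (in_polycyclic_comp (proj2_sig a) (proj2_sig b)).
Definition pc_one : polycyc := exist _ pid pc_id.

Lemma pc_mulA a b c : pc_mul a (pc_mul b c) = pc_mul (pc_mul a b) c.
Proof. by apply: polycyc_eq; rewrite /= pcompA. Qed.
Lemma pc_mul1m a : pc_mul pc_one a = a.
Proof. by apply: polycyc_eq; rewrite /= pcomp1f. Qed.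
Lemma pc_mulm1 a : pc_mul a pc_one = a.
Proof. by apply: polycyc_eq; rewrite /= pcompf1. Qed.

Definition polycyclic_monoid : monoid :=
  @Monoid polycyc pc_mul pc_one pc_mulA pc_mul1m pc_mulm1.
End Polycyclic.

Definition P2 : monoid := @polycyclic_monoid bool.

Definition oseq (T : Type) (o : option T) : seq T :=
  if o is Some x then [:: x] else [::].

(* Valence PDA over M with input alphabet S.
   delta q a g : the set of (q', g') ; a = None / g = None / g' = None
   stand for epsilon (no input read / no pop / no push). *)
Record vpda (S : finType) (M : monoid) := VPDA {
  pda_state : finType;
  pda_stack : finType;
  pda_delta : pda_state -> option S -> option pda_stack ->
              {set (pda_state * option pda_stack)};
  pda_init : pda_state;
  pda_accept : {set pda_state};
  pda_val : pda_state -> option S -> option pda_stack ->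
            pda_state -> option pda_stack -> M }.

(* @pda_run S M A q st w m q' st' : from configuration (q, st) (stack top = head)
   the PDA can read w and reach (q', st') by a computation of valence m. *)
Inductive pda_run (S : finType) (M : monoid) (A : vpda S M) :
  pda_state A -> seq (pda_stack A) -> seq S -> M ->
  pda_state A -> seq (pda_stack A) -> Prop :=
| prun_nil q st : @pda_run S M A q st [::] (mone M) q st
| prun_step q a g q1 g1 st w m q2 st2 :
    (q1, g1) \in @pda_delta S M A q a g ->
    @pda_run S M A q1 (oseq g1 ++ st) w m q2 st2 ->
    @pda_run S M A q (oseq g ++ st) (oseq a ++ w) (mmul (@pda_val S M A q a g q1 g1) m) q2 st2.

Definition pda_accepts (S : finType) (M : monoid) (A : vpda S M) (w : seq S) :=
  exists2 qf, qf \in pda_accept A & @pda_run S M A (pda_init A) [::] w (mone M) qf [::].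

Record vnfa (S : finType) (N : monoid) := VNFA {
  nfa_state : finType;
  nfa_delta : nfa_state -> option S -> {set nfa_state};
  nfa_init : nfa_state;
  nfa_accept : {set nfa_state};
  nfa_val : nfa_state -> option S -> nfa_state -> N }.

Inductive nfa_run (S : finType) (N : monoid) (A : vnfa S N) :
  nfa_state A -> seq S -> N -> nfa_state A -> Prop :=
| nrun_nil q : @nfa_run S N A q [::] (mone N) q
| nrun_step q a q1 w m q2 :
    q1 \in @nfa_delta S N A q a ->
    @nfa_run S N A q1 w m q2 ->
    @nfa_run S N A q (oseq a ++ w) (mmul (@nfa_val S N A q a q1) m) q2.

Definition nfa_accepts (S : finType) (N : monoid) (A : vnfa S N) (w : seq S) :=
  exists2 qf, qf \in nfa_accept A & @nfa_run S N A (nfa_init A) w (mone N) qf.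

Definition L_Val_PDA (M : monoid) (S : finType) (L : seq S -> Prop) : Prop :=
  exists A : vpda S M, forall w, L w <-> pda_accepts A w.

Definition L_Val_NFA (N : monoid) (S : finType) (L : seq S -> Prop) : Prop :=
  exists A : vnfa S N, forall w, L w <-> nfa_accepts A w.

(* Main.v *)
Require Import Defs.
From mathcomp Require Import all_boot.
From Stdlib Require Import FunctionalExtensionality ProofIrrelevance ClassicalEpsilon.

Set Implicit Arguments.
Unset Strict Implicit.
Unset Printing Implicit Defensive.
Local Notation pcomp := Defs.pcomp.
Local Notation pid := Defs.pid.

Definition genf (b : bool * bool) : pfun bool := if b.1 then Pgen b.2 else Qgen b.2.
Definition compose (l : seq (bool*bool)) : pfun bool :=
  foldr (fun g acc => pcomp (genf g) acc) (@pid bool) l.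

Lemma compose_nil u : compose [::] u = Some u.
Proof. reflexivity. Qed.

Lemma compose_cons g l u : compose (g :: l) u = obind (compose l) (genf g u).
Proof. reflexivity. Qed.

Lemma compose_cat l1 l2 u : compose (l1 ++ l2) u = obind (compose l2) (compose l1 u).
Proof.
elim: l1 u => [|g l IH] u //.
rewrite cat_cons !compose_cons.
by case: (genf g u) => //= v.
Qed.

Lemma compose1 g u : compose [:: g] u = genf g u.
Proof. by rewrite compose_cons; case: (genf g u). Qed.

Lemma genf_in g : in_polycyclic (genf g).
Proof.
case: g => [[] x]; rewrite /genf /= -(pcomp1f (_ x)).
- exact: pc_P (pc_id _).
- exact: pc_Q (pc_id _).
Qed.

Lemma compose_in l : in_polycyclic (compose l).
Proof.
elim: l => [|g l IH] /=; first exact: pc_id.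
exact: in_polycyclic_comp (genf_in g) IH.
Qed.

Lemma in_pc_compose f : in_polycyclic f -> exists l, f = compose l.
Proof.
elim=> [|x f' _ [l ->]|x f' _ [l ->]]; first by exists [::].
- exists (rcons l (true, x)); apply: functional_extensionality => u.
  by rewrite -cats1 compose_cat /Defs.pcomp; case: (compose l u) => //= v; rewrite compose1.
- exists (rcons l (false, x)); apply: functional_extensionality => u.
  by rewrite -cats1 compose_cat /Defs.pcomp; case: (compose l u) => //= v; rewrite /Defs.pcomp /genf /=; case: (Qgen x v).
Qed.

Lemma Qgen_rcons (x : bool) v : Qgen x (rcons v x) = Some v.
Proof.
by rewrite /Qgen size_rcons last_rcons eqxx /= -cats1 take_size_cat.
Qed.

Lemma Qgen_inv (x : bool) w v : Qgen x w = Some v -> w = rcons v x.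
Proof.
rewrite /Qgen; case/lastP: w => [|w y] //=.
rewrite size_rcons last_rcons /=; case: (y =P x) => // -> [<-].
by rewrite -cats1 take_size_cat // cats1.
Qed.

Lemma pc_prefix (f : pfun bool) : in_polycyclic f ->
  forall v v', f v = Some v' -> forall u, f (u ++ v) = Some (u ++ v').
Proof.
elim=> [|x f' _ IH|x f' _ IH] v v' /=.
- by rewrite /pid => -[->].
- rewrite /Defs.pcomp; case E: (f' v) => [w|] //= [<-] u.
  by rewrite (IH _ _ E) /= /Pgen rcons_cat.
- rewrite /Defs.pcomp; case E: (f' v) => [w|] //= /Qgen_inv Ew u.
  by rewrite Ew in E; rewrite (IH _ _ E) /= -rcons_cat Qgen_rcons.
Qed.

Lemma pc_unit (f : P2) : proj1_sig f [::] = Some [::] -> f = mone P2.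
Proof.
move=> H; apply: polycyc_eq; apply: functional_extensionality => u /=.
have := pc_prefix (proj2_sig f) H u; rewrite !cats0 => ->; by [].
Qed.
Lemma push_ok e v : compose (map (fun b => (true, b)) e) v = Some (v ++ e).
Proof.
elim: e v => [|b e IH] v; first by rewrite cats0.
by rewrite compose_cons /genf /= IH cat_rcons.
Qed.

Lemma pop_ok e v : compose (map (fun b => (false, b)) (rev e)) (v ++ e) = Some v.
Proof.
elim/last_ind: e v => [|e b IH] v; first by rewrite cats0.
by rewrite rev_rcons map_cons compose_cons /genf /= -rcons_cat Qgen_rcons /= IH.
Qed.

Lemma pop_inv e u v : compose (map (fun b => (false, b)) (rev e)) u = Some v -> u = v ++ e.
Proof.
elim/last_ind: e u v => [|e b IH] u v; first by move=> [->]; rewrite cats0.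
rewrite rev_rcons map_cons compose_cons /genf /=.
case E: (Qgen b u) => [u1|] //= /IH H.
by rewrite (Qgen_inv E) H rcons_cat.
Qed.

Lemma obind_some (T U : Type) (f : T -> option U) x : obind f (Some x) = f x.
Proof. by []. Qed.

Lemma pc_mulE (a b : mcar P2) u :
  proj1_sig (mmul a b) u = obind (proj1_sig b) (proj1_sig a u).
Proof. by []. Qed.

Lemma prun_step' (S : finType) (M : monoid) (A : vpda S M) q a g q1 g1 st w m q2 st2 st0 w0 m0 :
  (q1, g1) \in @pda_delta S M A q a g ->
  @pda_run S M A q1 (oseq g1 ++ st) w m q2 st2 ->
  st0 = oseq g ++ st -> w0 = oseq a ++ w -> m0 = mmul (@pda_val S M A q a g q1 g1) m ->
  @pda_run S M A q st0 w0 m0 q2 st2.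
Proof. by move=> H1 H2 -> -> ->; apply: prun_step. Qed.

Lemma nrun_step' (S : finType) (N : monoid) (A : vnfa S N) q a q1 w m q2 w0 m0 :
  q1 \in @nfa_delta S N A q a ->
  @nfa_run S N A q1 w m q2 ->
  w0 = oseq a ++ w -> m0 = mmul (@nfa_val S N A q a q1) m ->
  @nfa_run S N A q w0 m0 q2.
Proof. by move=> H1 H2 -> ->; apply: nrun_step. Qed.

Section C1.
Variables (S : finType) (M : monoid) (A : vpda S M).
Local Notation Q := (pda_state A).
Local Notation G := (pda_stack A).
Local Notation delta := (@pda_delta S M A).
Local Notation run := (@pda_run S M A).
Local Notation pval := (@pda_val S M A).

Definition enc (c : G) : seq bool := mkseq (fun j => j == enum_rank c :> nat) #|G|.+1.
Definition E (st : seq G) : seq bool := flatten (map enc (rev st)).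
Definition pushl (g : option G) :=
  if g is Some c then map (fun b => (true, b)) (enc c) else [::].
Definition popl (g : option G) :=
  if g is Some c then map (fun b => (false, b)) (rev (enc c)) else [::].
Definition sop (g g1 : option G) : mcar P2 :=
  exist _ (compose (popl g ++ pushl g1)) (compose_in _).

Arguments enc : simpl never.
Arguments E : simpl never.
Lemma size_enc c : size (enc c) = #|G|.+1.
Proof. by rewrite size_mkseq. Qed.

Lemma enc_inj : injective enc.
Proof.
move=> c d H.
have : nth false (enc c) (enum_rank c) = nth false (enc d) (enum_rank c) by rewrite H.
rewrite !nth_mkseq; last first.
- by apply: (leq_trans (ltn_ord _)).
- by apply: (leq_trans (ltn_ord _)).
by rewrite eqxx => /esym /eqP /val_inj /enum_rank_inj.
Qed.

Lemma E_cons c st : E (c :: st) = E st ++ enc c.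
Proof. by rewrite /E rev_cons -cats1 map_cat flatten_cat /= cats0. Qed.

Lemma E_nil st : E st = [::] -> st = [::].
Proof.
case: st => // c st; rewrite E_cons => /(congr1 size).
by rewrite size_cat size_enc addnS.
Qed.

Lemma E_decode st v c : E st = v ++ enc c -> exists st0, st = c :: st0 /\ v = E st0.
Proof.
case: st => [|d st].
  by move/(congr1 size); rewrite /= size_cat size_enc addnS.
rewrite E_cons => H.
have Hs : size (E st) = size v.
  by move/(congr1 size): H; rewrite !size_cat !size_enc => /addIn.
move/eqP: H; rewrite eqseq_cat // => /andP [/eqP H1 /eqP /enc_inj H2].
by exists st; rewrite H2 H1.
Qed.

Lemma sop_ok g g1 st :
  proj1_sig (sop g g1) (E (oseq g ++ st)) = Some (E (oseq g1 ++ st)).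
Proof.
rewrite /= compose_cat.
have -> : compose (popl g) (E (oseq g ++ st)) = Some (E st).
  by case: g => [c|] //=; rewrite E_cons pop_ok.
rewrite obind_some; case: g1 => [c|]; last by [].
by rewrite /pushl push_ok -[oseq (Some c) ++ st]/(c :: st) E_cons.
Qed.

Lemma sop_inv g g1 st v :
  proj1_sig (sop g g1) (E st) = Some v ->
  exists st0, st = oseq g ++ st0 /\ v = E (oseq g1 ++ st0).
Proof.
rewrite /= compose_cat.
case E1: (compose (popl g) (E st)) => [v0|] //; rewrite obind_some.
have [st0 [-> ->]] : exists st0, st = oseq g ++ st0 /\ v0 = E st0.
  case: g E1 => [c|] /=.
  - by move/pop_inv/E_decode.
  - by move=> [<-]; exists st.
case: g1 => [c|].
- by rewrite /pushl push_ok => -[<-]; exists st0; rewrite -[oseq (Some c) ++ st0]/(c :: st0) E_cons.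
- by move=> [<-]; exists st0.
Qed.

Definition nstate := (Q * option G * option G)%type.
Definition ndelta (p : nstate) (a : option S) : {set nstate} :=
  [set p' : nstate | (p'.1.1, p'.2) \in delta p.1.1 a p'.1.2].
Definition nval (p : nstate) (a : option S) (p' : nstate) : mcar (prod_monoid P2 M) :=
  (sop p'.1.2 p'.2, pval p.1.1 a p'.1.2 p'.1.1 p'.2).
Definition B1 : vnfa S (prod_monoid P2 M) :=
  @VNFA S (prod_monoid P2 M) nstate ndelta (pda_init A, None, None)
    [set p : nstate | p.1.1 \in pda_accept A] nval.

Lemma C1_fwd q st w m q2 st2 : run q st w m q2 st2 ->
  forall x y, exists x2 y2 (f : mcar P2),
    @nfa_run S (prod_monoid P2 M) B1 (q, x, y) w (f, m) (q2, x2, y2) /\ proj1_sig f (E st) = Some (E st2).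
Proof.
elim=> {q st w m q2 st2} [q st|q a g q1 g1 st w m q2 st2 Hd _ IH] x y.
  by exists x, y, (mone P2); split; [exact: nrun_nil|].
have [x2 [y2 [f [Hr Hf]]]] := IH g g1.
exists x2, y2, (@mmul P2 (sop g g1) f); split.
  apply: nrun_step' Hr _ _ => //.
  by rewrite inE.
by rewrite pc_mulE sop_ok obind_some.
Qed.

Lemma C1_bwd p w fm p2 : @nfa_run S (prod_monoid P2 M) B1 p w fm p2 ->
  forall st v, proj1_sig fm.1 (E st) = Some v ->
  exists st2, v = E st2 /\ run p.1.1 st w fm.2 p2.1.1 st2.
Proof.
elim=> {p w fm p2} [p|p a p1 w m p2 Hd _ IH] st v.
  by move=> [<-]; exists st; split => //; exact: prun_nil.
move=> Hv0.
have Hv : obind (proj1_sig m.1) (proj1_sig (sop p1.1.2 p1.2) (E st)) = Some v := Hv0.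
case E1: (proj1_sig (sop p1.1.2 p1.2) (E st)) Hv => [v0|] // Hv.
have [st0 [Est Ev0]] := sop_inv E1.
rewrite Ev0 obind_some in Hv.
have [st2 [-> Hr]] := IH _ _ Hv.
exists st2; split => //.
apply: prun_step' Hr Est _ _ => //.
by move: Hd; rewrite inE.
Qed.

Lemma C1_correct w : pda_accepts A w <-> nfa_accepts B1 w.
Proof.
split.
- move=> [qf Hqf Hr].
  have [x2 [y2 [f [Hn Hf]]]] := C1_fwd Hr None None.
  have Hf1 : f = mone P2 by apply: pc_unit.
  exists (qf, x2, y2); first by rewrite inE.
  by rewrite Hf1 in Hn.
- move=> [pf Hpf Hr].
  have [st2 [Hst Hp]] := C1_bwd Hr (st:=[::]) (v:=[::]) erefl.
  exists pf.1.1; first by move: Hpf; rewrite inE.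
  by rewrite (E_nil (esym Hst)) in Hp.
Qed.
End C1.
Section C2.
Variables (S : finType) (M : monoid) (B : vnfa S (prod_monoid P2 M)).
Local Notation Qn := (nfa_state B).
Local Notation ndelta := (@nfa_delta S (prod_monoid P2 M) B).
Local Notation nval := (@nfa_val S (prod_monoid P2 M) B).
Local Notation nrun := (@nfa_run S (prod_monoid P2 M) B).
Definition T3 := (Qn * option S * Qn)%type.
Variable lst : T3 -> seq (bool * bool).
Hypothesis hlst : forall t : T3, compose (lst t) = proj1_sig (nval t.1.1 t.1.2 t.2).1.

Definition Nmax := \max_(t : T3) size (lst t).
Definition pst := (Qn + (T3 * 'I_Nmax.+1))%type.

Definition genop (b : bool * bool) (g g1 : option bool) : bool :=
  if b.1 then (g == None) && (g1 == Some b.2) else (g == Some b.2) && (g1 == None).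

Definition cond (p : pst) (a : option S) (g : option bool) (p' : pst) (g1 : option bool) : bool :=
  match p with
  | inl q => [&& g == None, g1 == None &
      (if p' is inr (t, i) then
         [&& t.1.1 == q, t.1.2 == a, t.2 \in ndelta q a & (i == 0 :> nat)]
       else false)]
  | inr (t, i) => (a == None) &&
      (if i < size (lst t) then
         (if p' is inr (t', j) then (t' == t) && (j == i.+1 :> nat) else false)
         && genop (nth (true, true) (lst t) i) g g1
       else [&& p' == inl t.2, g == None & g1 == None])
  end.

Definition pdelta (p : pst) (a : option S) (g : option bool) : {set pst * option bool} :=
  [set x : pst * option bool | cond p a g x.1 x.2].

Definition pv (p : pst) (a : option S) (g : option bool) (p' : pst) (g1 : option bool) : M :=
  match p, p' with
  | inl q, inr (t, _) => (nval q a t.2).2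
  | _, _ => mone M
  end.

Definition A2 : vpda S M :=
  @VPDA S M pst bool pdelta (inl (nfa_init B))
    [set p : pst | if p is inl q then q \in nfa_accept B else false] pv.

Local Notation run := (@pda_run S M A2).

Lemma size_lst t : size (lst t) <= Nmax.
Proof. exact: (leq_bigmax t). Qed.

Lemma chain k (t : T3) i (hi : i < Nmax.+1) : size (lst t) = i + k ->
  forall u v, compose (drop i (lst t)) u = Some v ->
  forall w m p2 st2, run (inl t.2) (rev v) w m p2 st2 ->
  run (inr (t, Ordinal hi)) (rev u) w m p2 st2.
Proof.
elim: k i hi => [|k IH] i hi Hs u v.
  rewrite addn0 in Hs.
  rewrite drop_oversize ?Hs // compose_nil => -[<-] w m p2 st2 Hr.
  apply: (@prun_step' S M A2 _ None None _ None) Hr _ _ _ => //.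
  - by rewrite inE /cond /= Hs ltnn !eqxx.
  - by rewrite /= mul1m.
have Hlt : i < size (lst t) by rewrite Hs -addSnnS leq_addr.
have hi' : i.+1 < Nmax.+1 by rewrite ltnS; exact: leq_trans Hlt (size_lst t).
have Hs' : size (lst t) = i.+1 + k by rewrite Hs addnS addSn.
rewrite (drop_nth (true, true) Hlt) compose_cons.
case Eb: (nth (true, true) (lst t) i) => [[] x].
- rewrite /genf /= => Hv w m p2 st2 Hr.
  have := IH i.+1 hi' Hs' _ _ Hv w m p2 st2 Hr.
  rewrite rev_rcons => Hr'.
  apply: (@prun_step' S M A2 _ None None _ (Some x)) Hr' _ _ _ => //.
  + by rewrite inE /cond /= Hlt !eqxx Eb /genop /= !eqxx.
  + by rewrite /= mul1m.
- rewrite /genf /=.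
  case Eq: (Qgen x u) => [u1|] //= Hv w m p2 st2 Hr.
  have Hr' := IH i.+1 hi' Hs' _ _ Hv w m p2 st2 Hr.
  apply: (@prun_step' S M A2 _ None (Some x) _ None) Hr' _ _ _ => //.
  + by rewrite inE /cond /= Hlt !eqxx Eb /genop /= !eqxx.
  + by rewrite (Qgen_inv Eq) rev_rcons.
  + by rewrite /= mul1m.
Qed.

Lemma C2_fwd q w fm q2 : nrun q w fm q2 ->
  forall u u', proj1_sig fm.1 u = Some u' ->
  run (inl q) (rev u) w fm.2 (inl q2) (rev u').
Proof.
elim=> {q w fm q2} [q|q a q1 w m q2 Hd _ IH] u u'.
  by move=> [<-]; exact: prun_nil.
move=> Hv0.
have Hv : obind (proj1_sig m.1) (proj1_sig (nval q a q1).1 u) = Some u' := Hv0.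
case E1: (proj1_sig (nval q a q1).1 u) Hv => [v|] //; rewrite obind_some => Hv.
have Hr := IH _ _ Hv.
have Hc : compose (drop 0 (lst (q, a, q1))) u = Some v by rewrite drop0 hlst.
have Hr2 := @chain (size (lst (q, a, q1))) (q, a, q1) 0 (ltn0Sn _) erefl _ _ Hc _ _ _ _ Hr.
apply: (@prun_step' S M A2 _ a None _ None) Hr2 _ _ _ => //.
by rewrite inE /cond /= !eqxx Hd.
Qed.

Lemma C2_bwd p st w m p2 st2 : run p st w m p2 st2 -> forall q2, p2 = inl q2 ->
  match p with
  | inl q => exists f : mcar P2, nrun q w (f, m) q2 /\ proj1_sig f (rev st) = Some (rev st2)
  | inr (t, i) => exists f : mcar P2, nrun t.2 w (f, m) q2 /\
      obind (proj1_sig f) (compose (drop i (lst t)) (rev st)) = Some (rev st2)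
  end.
Proof.
elim=> {p st w m p2 st2} [p st|p a g p1 g1 st w m p2 st2 Hd _ IH] q2 Ep2.
  subst p; exists (mone P2); split => //; exact: nrun_nil.
have {}IH := IH q2 Ep2.
move: Hd; rewrite inE /=.
case: p => [q|[t i]] /=.
- case/and3P => /eqP Eg /eqP Eg1; subst g g1.
  case: p1 IH => [q1|[[[q0 a0] q1] j]] //= IH.
  case/and4P => /eqP E0 /eqP E1 Hq1 /eqP Ej; subst q0 a0.
  have [f [Hr Hf]] := IH.
  exists (mmul (nval q a q1).1 f); split.
  + exact: (nrun_step' Hq1 Hr).
  + suff : obind (sval f) (sval (nval q a q1).1 (rev st)) = Some (rev st2) by [].
    by rewrite -(hlst (q, a, q1)); move: Hf; rewrite Ej drop0.
- case/andP => /eqP -> /=.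
  case: ifP => Hlt.
  + case/andP; case: p1 IH => [q1|[t' j]] //= IH /andP [/eqP Et /eqP Ej] Hg.
    subst t'.
    have [f [Hr Hf]] := IH.
    exists f; split; first by rewrite mul1m.
    rewrite (drop_nth (true, true) Hlt) compose_cons -Ej.
    case: (nth (true, true) (lst t) i) Hg => [[] x]; rewrite /genop /=.
    * case/andP => /eqP Eg /eqP Eg1; subst g g1.
      by rewrite /genf /= -rev_cons.
    * case/andP => /eqP Eg /eqP Eg1; subst g g1.
      by rewrite /genf /= rev_cons Qgen_rcons.
  + case/and3P => /eqP Ep1 /eqP Eg /eqP Eg1; subst p1 g g1.
    have [f [Hr Hf]] := IH.
    exists f; split; first by rewrite mul1m.
    by rewrite drop_oversize ?compose_nil // leqNgt Hlt.
Qed.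

Lemma C2_correct w : nfa_accepts B w <-> pda_accepts A2 w.
Proof.
split.
- move=> [qf Hqf Hr].
  have := C2_fwd Hr (u := [::]) (u' := [::]) erefl.
  move=> H; exists (inl qf); first by rewrite inE.
  exact: H.
- move=> [[qf|pf] Hpf Hr]; last by move: Hpf; rewrite inE.
  have [f [Hn Hf]] := C2_bwd Hr erefl.
  exists qf; first by move: Hpf; rewrite inE.
  by rewrite (pc_unit Hf) in Hn.
Qed.
End C2.

Theorem theorem1 (M : monoid) (S : finType) (L : seq S -> Prop) :
  @L_Val_PDA M S L <-> @L_Val_NFA (prod_monoid P2 M) S L.
Proof.
split.
- move=> [A HA]; exists (B1 A) => w.
  exact: (iff_trans (HA w) (C1_correct A w)).
- move=> [B HB].
  have H : forall t : T3 B, exists l,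
      compose l = proj1_sig (@nfa_val S (prod_monoid P2 M) B t.1.1 t.1.2 t.2).1.
    move=> t.
    have [l El] := in_pc_compose (proj2_sig (@nfa_val S (prod_monoid P2 M) B t.1.1 t.1.2 t.2).1).
    by exists l.
  pose lst := fun t => proj1_sig (constructive_indefinite_description _ (H t)).
  have hlst : forall t : T3 B, compose (lst t) =
      proj1_sig (@nfa_val S (prod_monoid P2 M) B t.1.1 t.1.2 t.2).1 :=
    fun t => proj2_sig (constructive_indefinite_description _ (H t)).
  exists (A2 lst) => w.
  exact: (iff_trans (HB w) (C2_correct hlst w)).
Qed.
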